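(* Let $q_0\in\mathbb{R}$ with $q_0<-\frac{\pi^2}{4}$, and consider the Dirichlet problem $$-y''+q_0\,y=\lambda\, w(x)\,y,\quad -1\le x\le 1,\qquad y(-1)=y(1)=0,$$ where $w(x)=1$ for $x\ge 0$ and $w(x)=-1$ for $x<0$. Then the Richardson number $\lambda^-$ of this problem satisfies $\lambda^-\ge -|q_0|+\frac{\pi^2}{4}$. Equivalently: for every real eigenvalue $\lambda<-|q_0|+\frac{\pi^2}{4}$ of this problem and every corresponding nontrivial eigenfunction $u$, one has $\int_{-1}^1 w(x)|u(x)|^2\,dx<0$.
   Context: Solutions are understood as $C^1$ functions on $[-1,1]$ with absolutely continuous derivative satisfying the equation almost everywhere. For a regular Dirichlet problem $y''+(\lambda w+q)y=0$ on $[a,b]$, $y(a)=y(b)=0$, with real piecewise continuous $w,q$, the Richardson numbers are $$\lambda^+=\inf\Big\{\rho\in\mathbb{R}:\ \text{for every real eigenvalue }\lambda>\rho\text{ and every eigenfunction }u\text{ for }\lambda,\ \int_a^b w|u|^2\,dx>0\Big\},$$ $$\lambda^-=\sup\Big\{\rho\in\mathbb{R}:\ \text{for every real eigenvalue }\lambda<\rho\text{ and every eigenfunction }u\text{ for }\lambda,\ \int_a^b w|u|^2\,dx<0\Big\}.$$ *)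

(* Defs.v *)
From Stdlib Require Import Reals List.
Import ListNotations.
Open Scope R_scope.

Definition has_deriv_on (a b : R) (f f' : R -> R) : Prop :=
  forall x, a <= x <= b ->
  forall eps, 0 < eps -> exists delta, 0 < delta /\
    forall h, h <> 0 -> Rabs h < delta -> a <= x + h <= b ->
      Rabs ((f (x + h) - f x) / h - f' x) < eps.

Fixpoint nonoverlap (lo : R) (l : list (R * R)) (hi : R) : Prop :=
  match l with
  | [] => lo <= hi
  | (x, y) :: t => lo <= x /\ x <= y /\ nonoverlap y t hi
  end.

Fixpoint total_length (l : list (R * R)) : R :=
  match l with
  | [] => 0
  | (x, y) :: t => (y - x) + total_length t
  end.

Fixpoint total_variation (f : R -> R) (l : list (R * R)) : R :=
  match l with
  | [] => 0
  | (x, y) :: t => Rabs (f y - f x) + total_variation f t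
  end.

Definition abs_continuous_on (a b : R) (f : R -> R) : Prop :=
  forall eps, 0 < eps -> exists delta, 0 < delta /\
    forall l, nonoverlap a l b -> total_length l < delta ->
      total_variation f l < eps.

Definition null_set (N : R -> Prop) : Prop :=
  forall eps, 0 < eps -> exists a b : nat -> R,
    (forall n, a n <= b n) /\
    (forall x, N x -> exists n, a n < x < b n) /\
    (forall n, sum_f_R0 (fun k => b k - a k) n <= eps).

(* y is a solution on [a,b] of y'' + (lam w + q) y = 0: y is C^1 with
   absolutely continuous derivative and the equation holds a.e. *)
Definition is_solution (a b : R) (w q : R -> R) (lam : R) (y : R -> R) : Prop :=
  exists y' : R -> R,
    has_deriv_on a b y y' /\
    abs_continuous_on a b y' /\
    exists N, null_set N /\
      forall x, a < x < b -> ~ N x ->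
        derivable_pt_lim y' x (- (lam * w x + q x) * y x).

(* (u1, u2) = real and imaginary parts of a (complex-valued) eigenfunction
   of the Dirichlet problem y'' + (lam w + q) y = 0, y(a) = y(b) = 0. *)
Definition is_eigenfunction (a b : R) (w q : R -> R) (lam : R)
    (u1 u2 : R -> R) : Prop :=
  is_solution a b w q lam u1 /\ is_solution a b w q lam u2 /\
  u1 a = 0 /\ u2 a = 0 /\ u1 b = 0 /\ u2 b = 0 /\
  exists x, a <= x <= b /\ (u1 x <> 0 \/ u2 x <> 0).

(* rho belongs to the set whose supremum is the Richardson number lambda^- :
   every eigenfunction for a real eigenvalue lam < rho has
   int_a^b w |u|^2 < 0. *)
Definition richardson_minus_set (a b : R) (w q : R -> R) (rho : R) : Prop :=
  forall lam u1 u2, lam < rho -> is_eigenfunction a b w q lam u1 u2 ->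
    exists pr : Riemann_integrable
                  (fun x => w x * (u1 x ^ 2 + u2 x ^ 2)) a b,
      RiemannInt pr < 0.

(* lambda^- >= c, i.e. sup (richardson_minus_set) >= c in extended reals. *)
Definition richardson_minus_ge (a b : R) (w q : R -> R) (c : R) : Prop :=
  forall c', c' < c -> exists rho, c' < rho /\ richardson_minus_set a b w q rho.

Definition w_sign (x : R) : R := if Rle_dec 0 x then 1 else -1.

(* Main.v *)
Require Import Defs.
From Stdlib Require Import Reals Lra Lia List Classical.
Import ListNotations.
Open Scope R_scope.


Lemma nonoverlap_app : forall l1 l2 x y z,
  nonoverlap x l1 y -> nonoverlap y l2 z -> nonoverlap x (l1 ++ l2) z.
Proof.
  induction l1 as [|[p q] t IH]; simpl; intros l2 x y z H1 H2.
  - destruct l2 as [|[p q] t]; simpl in *; [lra|]. destruct H2 as [? [? ?]]. split; [lra|auto].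
  - destruct H1 as [? [? ?]]. split; [auto|split; [auto|]]. eapply IH; eauto.
Qed.

Lemma nonoverlap_le : forall l x y, nonoverlap x l y -> x <= y.
Proof.
  induction l as [|[p q] t IH]; simpl; intros x y H; [lra|].
  destruct H as [? [? H]]. apply IH in H. lra.
Qed.

Lemma nonoverlap_widen : forall l x y a b,
  nonoverlap x l y -> a <= x -> y <= b -> nonoverlap a l b.
Proof.
  induction l as [|[p q] t IH]; simpl; intros x y a b H Ha Hb; [lra|].
  destruct H as [? [? H]]. split; [lra|split; [auto|]]. eapply IH; eauto; lra.
Qed.

Lemma tl_app : forall l1 l2, total_length (l1 ++ l2) = total_length l1 + total_length l2.
Proof. induction l1 as [|[p q] t IH]; simpl; intros; [lra|rewrite IH; lra]. Qed.

Lemma tv_app : forall f l1 l2, total_variation f (l1 ++ l2) = total_variation f l1 + total_variation f l2.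
Proof. induction l1 as [|[p q] t IH]; simpl; intros; [lra|rewrite IH; lra]. Qed.

Lemma cousin_ind (c d : R) (P : R -> R -> Prop) :
  c <= d ->
  (forall x y z, c <= x -> x <= y -> y <= z -> z <= d -> P x y -> P y z -> P x z) ->
  (forall t, c <= t <= d -> exists r, 0 < r /\
      forall x y, c <= x -> x <= t -> t <= y -> y <= d -> y - x < r -> P x y) ->
  P c d.
Proof.
  intros Hcd Htr Hloc.
  set (E := fun s => c <= s <= d /\ P c s).
  assert (Ec : E c).
  { split; [lra|]. destruct (Hloc c) as [r [Hr H]]; [lra|]. apply H; lra. }
  assert (Hb : bound E). { exists d. intros s [Hs _]. lra. }
  destruct (completeness E Hb (ex_intro _ c Ec)) as [s0 [Hub Hlub]].
  assert (Hs0c : c <= s0) by (apply Hub; auto).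
  assert (Hs0d : s0 <= d). { apply Hlub. intros s [Hs _]. lra. }
  destruct (Hloc s0) as [r [Hr Hl]]; [lra|].
  assert (Hex : exists s, E s /\ s0 - r / 2 < s).
  { apply NNPP. intro Hn.
    assert (s0 <= s0 - r/2); [|lra].
    apply Hlub. intros s Es. apply Rnot_lt_le. intro Hlt. apply Hn. exists s; auto. }
  destruct Hex as [s [[Hs1 Hs2] Hs3]].
  assert (Hss0 : s <= s0) by (apply Hub; split; auto).
  set (s1 := Rmin d (s0 + r/2)).
  assert (Hs1d : s1 <= d) by apply Rmin_l.
  assert (Hs1g : s0 <= s1) by (unfold s1; apply Rmin_glb; lra).
  assert (Ps1 : P c s1).
  { apply Htr with s; try lra; auto. apply Hl; try lra.
    unfold s1. pose proof (Rmin_r d (s0 + r/2)). lra. }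
  assert (s1 <= s0) by (apply Hub; split; [lra|auto]).
  destruct (Rle_lt_dec d s0) as [Hd|Hd].
  - assert (s1 = d) by lra. rewrite <- H0. auto.
  - exfalso. unfold s1, Rmin in *. destruct (Rle_dec d (s0 + r/2)); lra.
Qed.

Definition ell (a b : nat -> R) (n : nat) (x : R) := Rmax 0 (b n - Rmax (a n) x).
Definition Tb (a b : nat -> R) (M : nat) (x : R) := sum_f_R0 (fun n => ell a b n x) M.

Lemma ell_mono a b n x y : x <= y -> ell a b n y <= ell a b n x.
Proof.
  intro H. unfold ell. unfold Rmax at 2 4.
  destruct (Rle_dec (a n) y), (Rle_dec (a n) x); apply Rle_max_compat_l; lra.
Qed.

Lemma Tb_S a b M x : Tb a b (S M) x = Tb a b M x + ell a b (S M) x.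
Proof. reflexivity. Qed.

Lemma D_nonneg a b M x y : x <= y -> 0 <= Tb a b M x - Tb a b M y.
Proof.
  intro H. induction M.
  - unfold Tb; simpl. pose proof (ell_mono a b 0 x y H). lra.
  - rewrite !Tb_S. pose proof (ell_mono a b (S M) x y H). lra.
Qed.

Lemma D_mono a b M M' x y : x <= y -> (M <= M')%nat ->
  Tb a b M x - Tb a b M y <= Tb a b M' x - Tb a b M' y.
Proof.
  intros H HM. induction HM; [lra|].
  rewrite !Tb_S. pose proof (ell_mono a b (S m) x y H). lra.
Qed.

Lemma D_term a b k M x y : x <= y -> (k <= M)%nat ->
  ell a b k x - ell a b k y <= Tb a b M x - Tb a b M y.
Proof.
  intros H HM. induction HM.
  - destruct k.
    + unfold Tb; simpl; lra.
    + rewrite !Tb_S. pose proof (D_nonneg a b k x y H). lra.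
  - rewrite !Tb_S. pose proof (ell_mono a b (S m) x y H). lra.
Qed.

Lemma Rabs_le_lim (z K : R) : (forall eps, 0 < eps -> Rabs z <= eps * K) -> 0 <= K -> z = 0.
Proof.
  intros H HK. destruct (Req_dec z 0) as [|Hz]; auto. exfalso.
  pose proof (Rabs_pos_lt z Hz).
  specialize (H (Rabs z / (2 * (K + 1)))).
  assert (0 < Rabs z / (2 * (K+1))) by (apply Rdiv_lt_0_compat; lra).
  specialize (H H1).
  assert (E : Rabs z / (2 * (K + 1)) * (K+1) = Rabs z / 2) by (field; lra).
  nra.
Qed.

Lemma ACconst a b F N :
  abs_continuous_on a b F -> null_set N ->
  (forall x, a < x < b -> ~ N x -> derivable_pt_lim F x 0) ->
  forall c d, a < c -> c <= d -> d < b -> F c = F d.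
Proof.
  intros HAC HN HD c d Hac Hcd Hdb.
  cut (F d - F c = 0); [lra|].
  apply (Rabs_le_lim _ (d - c + 1)); [|lra].
  intros eps Heps.
  destruct (HAC eps Heps) as [delta [Hdel Hac']].
  destruct (HN (delta / 2)) as [an [bn [Hab [Hcov Hsum]]]]; [lra|].
  set (P := fun x y => exists L M, nonoverlap x L y /\
        Rabs (F y - F x) <= eps * (y - x) + total_variation F L /\
        total_length L <= Tb an bn M x - Tb an bn M y).
  assert (HP : P c d).
  { apply cousin_ind; auto.
    - intros x y z _ Hxy Hyz _ [L1 [M1 [H1 [H2 H3]]]] [L2 [M2 [H4 [H5 H6]]]].
      exists (L1 ++ L2), (Nat.max M1 M2). split; [eapply nonoverlap_app; eauto|].
      rewrite tv_app, tl_app. split.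
      + replace (F z - F x) with ((F z - F y) + (F y - F x)) by ring.
        eapply Rle_trans; [apply Rabs_triang|]. nra.
      + pose proof (D_mono an bn M1 (Nat.max M1 M2) x y Hxy (Nat.le_max_l _ _)).
        pose proof (D_mono an bn M2 (Nat.max M1 M2) y z Hyz (Nat.le_max_r _ _)).
        lra.
    - intros t Ht. destruct (classic (N t)) as [HNt|HNt].
      + destruct (Hcov t HNt) as [n Hn].
        exists (Rmin (t - an n) (bn n - t)). split; [apply Rmin_glb_lt; lra|].
        intros x y Hcx Hxt Hty Hyd Hr.
        pose proof (Rmin_l (t - an n) (bn n - t)). pose proof (Rmin_r (t - an n) (bn n - t)).
        exists [(x, y)], n. simpl. split; [lra|]. split.
        * pose proof (Rabs_pos (F y - F x)). nra.
        * pose proof (D_term an bn n n x y ltac:(lra) (le_n n)).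
          assert (ell an bn n x - ell an bn n y = y - x); [|lra].
          unfold ell. rewrite (Rmax_right (an n) x) by lra. rewrite (Rmax_right (an n) y) by lra.
          rewrite !Rmax_right by lra. ring.
      + destruct (HD t ltac:(lra) HNt eps Heps) as [del Hdl].
        exists del. split; [apply cond_pos|].
        intros x y Hcx Hxt Hty Hyd Hr.
        assert (Hloc : forall z, Rabs (z - t) < del -> Rabs (F z - F t) <= eps * Rabs (z - t)).
        { intros z Hz. destruct (Req_dec z t) as [->|Hzt].
          - rewrite !Rminus_diag, Rabs_R0. lra.
          - specialize (Hdl (z - t) ltac:(lra) Hz). replace (t + (z - t)) with z in Hdl by ring.
            rewrite Rminus_0_r in Hdl.
            replace (F z - F t) with ((F z - F t) / (z - t) * (z - t)) by (field; lra).
            rewrite Rabs_mult. apply Rmult_le_compat_r; [apply Rabs_pos|lra]. }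
        exists [], 0%nat. simpl. split; [lra|]. split.
        * replace (F y - F x) with ((F y - F t) - (F x - F t)) by ring.
          eapply Rle_trans; [apply Rabs_triang|]. rewrite Rabs_Ropp.
          pose proof (Hloc y ltac:(rewrite Rabs_right; lra)).
          pose proof (Hloc x ltac:(rewrite Rabs_left1; lra)).
          rewrite (Rabs_right (y - t)) in H by lra. rewrite (Rabs_left1 (x - t)) in H0 by lra.
          nra.
        * apply D_nonneg; lra. }
  destruct HP as [L [M [H1 [H2 H3]]]].
  assert (total_length L < delta).
  { assert (Tb an bn M c - Tb an bn M d <= Tb an bn M c).
    { assert (0 <= Tb an bn M d); [|lra]. apply cond_pos_sum. intro; apply Rmax_l. }
    assert (Tb an bn M c <= sum_f_R0 (fun k => bn k - an k) M).
    { apply sum_Rle. intros n _. unfold ell. apply Rmax_lub; [specialize (Hab n); lra|].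
      pose proof (Rmax_l (an n) c). lra. }
    specialize (Hsum M). lra. }
  specialize (Hac' L ltac:(eapply nonoverlap_widen; eauto; lra) H).
  replace (eps * (d - c + 1)) with (eps * (d - c) + eps) by ring. lra.
Qed.

Lemma hd_local a b f f' t : has_deriv_on a b f f' -> a <= t <= b ->
  exists r, 0 < r /\ forall z, a <= z <= b -> Rabs (z - t) < r ->
    Rabs (f z - f t) <= (Rabs (f' t) + 1) * Rabs (z - t).
Proof.
  intros H Ht. destruct (H t Ht 1 ltac:(lra)) as [r [Hr Hl]]. exists r. split; auto.
  intros z Hz Hzt. destruct (Req_dec z t) as [->|Hne].
  - rewrite !Rminus_diag, Rabs_R0. lra.
  - specialize (Hl (z - t) ltac:(lra) Hzt). replace (t + (z - t)) with z in Hl by ring.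
    specialize (Hl Hz).
    replace (f z - f t) with ((f z - f t) / (z - t) * (z - t)) by (field; lra).
    rewrite Rabs_mult. apply Rmult_le_compat_r; [apply Rabs_pos|].
    replace ((f z - f t) / (z - t)) with (((f z - f t) / (z - t) - f' t) + f' t) by ring.
    eapply Rle_trans; [apply Rabs_triang|]. lra.
Qed.

Lemma bounded_local a b f : a <= b ->
  (forall t, a <= t <= b -> exists r, 0 < r /\ forall z, a <= z <= b -> Rabs (z - t) < r ->
     Rabs (f z) <= Rabs (f t) + 1) ->
  exists K, 0 <= K /\ forall z, a <= z <= b -> Rabs (f z) <= K.
Proof.
  intros Hab Hl.
  assert (H : exists K, forall z, a <= z <= b -> Rabs (f z) <= K).
  { apply (cousin_ind a b (fun x y => exists K, forall z, x <= z <= y -> Rabs (f z) <= K)); auto.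
    - intros x y z _ _ _ _ [K1 H1] [K2 H2]. exists (Rmax K1 K2). intros w Hw.
      destruct (Rle_dec w y).
      + eapply Rle_trans; [apply H1; lra|apply Rmax_l].
      + eapply Rle_trans; [apply H2; lra|apply Rmax_r].
    - intros t Ht. destruct (Hl t Ht) as [r [Hr H]]. exists r. split; auto.
      intros x y Hax Hxt Hty Hyb Hr'. exists (Rabs (f t) + 1). intros z Hz.
      apply H; [lra|]. unfold Rabs; destruct (Rcase_abs (z - t)); lra. }
  destruct H as [K H]. exists K. split; auto. eapply Rle_trans; [apply Rabs_pos|apply (H a)]; lra.
Qed.

Lemma hd_bounded a b f f' : a <= b -> has_deriv_on a b f f' ->
  exists K, 0 <= K /\ forall z, a <= z <= b -> Rabs (f z) <= K.
Proof.
  intros Hab H. apply bounded_local; auto. intros t Ht.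
  destruct (hd_local a b f f' t H Ht) as [r [Hr Hl]].
  exists (Rmin r (/ (Rabs (f' t) + 1))). split.
  { apply Rmin_glb_lt; auto. apply Rinv_0_lt_compat. pose proof (Rabs_pos (f' t)); lra. }
  intros z Hz Hzt. pose proof (Rmin_l r (/ (Rabs (f' t) + 1))). pose proof (Rmin_r r (/ (Rabs (f' t) + 1))).
  specialize (Hl z Hz ltac:(lra)).
  assert ((Rabs (f' t) + 1) * Rabs (z - t) <= 1).
  { pose proof (Rabs_pos (f' t)).
    assert (Rabs (z-t) * (Rabs (f' t)+1) <= / (Rabs (f' t)+1) * (Rabs (f' t)+1)) by (apply Rmult_le_compat_r; lra).
    rewrite Rinv_l in H3 by lra. lra. }
  replace (f z) with ((f z - f t) + f t) by ring.
  eapply Rle_trans; [apply Rabs_triang|]. lra.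
Qed.

Lemma lip_of_deriv a b f f' K : has_deriv_on a b f f' ->
  (forall x, a <= x <= b -> Rabs (f' x) <= K) ->
  forall x y, a <= x -> x <= y -> y <= b -> Rabs (f y - f x) <= (K + 1) * (y - x).
Proof.
  intros H HK x y Hax Hxy Hyb.
  apply (cousin_ind x y (fun s t => Rabs (f t - f s) <= (K + 1) * (t - s))); auto.
  - intros s t z _ _ _ _ H1 H2. replace (f z - f s) with ((f z - f t) + (f t - f s)) by ring.
    eapply Rle_trans; [apply Rabs_triang|]. lra.
  - intros t Ht. destruct (hd_local a b f f' t H ltac:(lra)) as [r [Hr Hl]].
    exists r. split; auto. intros s z Hs Hst Htz Hz Hr'.
    pose proof (HK t ltac:(lra)).
    pose proof (Hl z ltac:(lra) ltac:(rewrite Rabs_right; lra)).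
    pose proof (Hl s ltac:(lra) ltac:(rewrite Rabs_left1; lra)).
    rewrite (Rabs_right (z - t)) in H1 by lra. rewrite (Rabs_left1 (s - t)) in H2 by lra.
    replace (f z - f s) with ((f z - f t) - (f s - f t)) by ring.
    eapply Rle_trans; [apply Rabs_triang|]. rewrite Rabs_Ropp.
    pose proof (Rabs_pos (f' t)). nra.
Qed.

Lemma AC_cont a b f t : abs_continuous_on a b f -> a <= t <= b ->
  forall eps, 0 < eps -> exists r, 0 < r /\ forall z, a <= z <= b -> Rabs (z - t) < r ->
    Rabs (f z - f t) < eps.
Proof.
  intros H Ht eps Heps. destruct (H eps Heps) as [d [Hd Hl]]. exists d. split; auto.
  intros z Hz Hzt. destruct (Rle_dec t z).
  - specialize (Hl [(t, z)]). simpl in Hl. rewrite Rabs_right in Hzt by lra. 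
    assert (Rabs (f z - f t) + 0 < eps) by (apply Hl; lra). lra.
  - specialize (Hl [(z, t)]). simpl in Hl. rewrite Rabs_left1 in Hzt by lra.
    rewrite Rabs_minus_sym. assert (Rabs (f t - f z) + 0 < eps) by (apply Hl; lra). lra.
Qed.

Lemma AC_bounded a b f : a <= b -> abs_continuous_on a b f ->
  exists K, 0 <= K /\ forall z, a <= z <= b -> Rabs (f z) <= K.
Proof.
  intros Hab H. apply bounded_local; auto. intros t Ht.
  destruct (AC_cont a b f t H Ht 1 ltac:(lra)) as [r [Hr Hl]]. exists r. split; auto.
  intros z Hz Hzt. specialize (Hl z Hz Hzt).
  replace (f z) with ((f z - f t) + f t) by ring.
  eapply Rle_trans; [apply Rabs_triang|]. lra.
Qed.

Lemma AC_restrict a b c d f : abs_continuous_on a b f -> a <= c -> d <= b ->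
  abs_continuous_on c d f.
Proof.
  intros H Hac Hdb eps Heps. destruct (H eps Heps) as [del [Hd Hl]]. exists del. split; auto.
  intros l Hl' Hlen. apply Hl; auto. eapply nonoverlap_widen; eauto.
Qed.

Lemma tv_lip c d f K : 0 <= K -> (forall x y, c <= x -> x <= y -> y <= d -> Rabs (f y - f x) <= K * (y - x)) ->
  forall l lo, c <= lo -> nonoverlap lo l d -> total_variation f l <= K * total_length l.
Proof.
  intros HK Hf. induction l as [|[x y] t IH]; simpl; intros lo Hlo Hn; [lra|].
  destruct Hn as [H1 [H2 H3]]. pose proof (nonoverlap_le _ _ _ H3).
  pose proof (Hf x y ltac:(lra) H2 H). specialize (IH y ltac:(lra) H3). lra.
Qed.

Lemma AC_lip c d f K : 0 <= K -> (forall x y, c <= x -> x <= y -> y <= d -> Rabs (f y - f x) <= K * (y - x)) ->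
  abs_continuous_on c d f.
Proof.
  intros HK Hf eps Heps. exists (eps / (K + 1)). split; [apply Rdiv_lt_0_compat; lra|].
  intros l Hl Hlen. pose proof (tv_lip c d f K HK Hf l c (Rle_refl _) Hl).
  assert (0 <= total_length l).
  { clear -Hl. revert c Hl. induction l as [|[x y] t IH]; simpl; intros c Hl; [lra|].
    destruct Hl as [? [? ?]]. specialize (IH y H1). lra. }
  assert (K * total_length l < eps); [|lra].
  apply Rle_lt_trans with ((K + 1) * total_length l); [nra|].
  replace eps with ((K+1) * (eps / (K+1))) by (field; lra).
  apply Rmult_lt_compat_l; lra.
Qed.

Lemma AC_minus c d f g : abs_continuous_on c d f -> abs_continuous_on c d g ->
  abs_continuous_on c d (fun x => f x - g x).
Proof.
  intros Hf Hg eps Heps.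
  destruct (Hf (eps/2) ltac:(lra)) as [d1 [Hd1 H1]]. destruct (Hg (eps/2) ltac:(lra)) as [d2 [Hd2 H2]].
  exists (Rmin d1 d2). split; [apply Rmin_glb_lt; auto|]. intros l Hl Hlen.
  pose proof (Rmin_l d1 d2). pose proof (Rmin_r d1 d2).
  specialize (H1 l Hl ltac:(lra)). specialize (H2 l Hl ltac:(lra)).
  assert (total_variation (fun x => f x - g x) l <= total_variation f l + total_variation g l); [|lra].
  clear. induction l as [|[x y] t IH]; simpl; [lra|].
  replace (f y - g y - (f x - g x)) with ((f y - f x) + - (g y - g x)) by ring.
  pose proof (Rabs_triang (f y - f x) (- (g y - g x))). rewrite Rabs_Ropp in H. lra.
Qed.

Lemma AC_mult c d f g Fb Kg G : 0 <= Fb -> 0 <= Kg -> 0 <= G ->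
  abs_continuous_on c d f -> (forall z, c <= z <= d -> Rabs (f z) <= Fb) ->
  (forall x y, c <= x -> x <= y -> y <= d -> Rabs (g y - g x) <= Kg * (y - x)) ->
  (forall z, c <= z <= d -> Rabs (g z) <= G) ->
  abs_continuous_on c d (fun x => f x * g x).
Proof.
  intros HF HK HG Hf Hfb Hg Hgb eps Heps.
  destruct (Hf (eps / (2 * (G + 1)))) as [d1 [Hd1 H1]]; [apply Rdiv_lt_0_compat; lra|].
  exists (Rmin d1 (eps / (2 * (Fb * Kg + 1)))). split.
  { apply Rmin_glb_lt; auto. apply Rdiv_lt_0_compat; nra. }
  intros l Hl Hlen. pose proof (Rmin_l d1 (eps / (2 * (Fb * Kg + 1)))).
  pose proof (Rmin_r d1 (eps / (2 * (Fb * Kg + 1)))).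
  specialize (H1 l Hl ltac:(lra)).
  assert (Hb : forall l lo, c <= lo -> nonoverlap lo l d ->
     total_variation (fun x => f x * g x) l <= G * total_variation f l + Fb * Kg * total_length l).
  { clear - Hfb Hg Hgb HF HK HG. induction l as [|[x y] t IH]; simpl; intros lo Hlo Hn; [lra|].
    destruct Hn as [H1 [H2 H3]]. pose proof (nonoverlap_le _ _ _ H3).
    specialize (IH y ltac:(lra) H3).
    replace (f y * g y - f x * g x) with ((f y - f x) * g y + f x * (g y - g x)) by ring.
    pose proof (Rabs_triang ((f y - f x) * g y) (f x * (g y - g x))).
    rewrite !Rabs_mult in H0.
    pose proof (Hgb y ltac:(lra)). pose proof (Hfb x ltac:(lra)). pose proof (Hg x y ltac:(lra) H2 H).
    pose proof (Rabs_pos (f y - f x)). pose proof (Rabs_pos (f x)). pose proof (Rabs_pos (g y - g x)).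
    assert (Rabs (f y - f x) * Rabs (g y) <= Rabs (f y - f x) * G) by (apply Rmult_le_compat_l; lra).
    assert (Rabs (f x) * Rabs (g y - g x) <= Fb * (Kg * (y - x))) by (apply Rmult_le_compat; lra).
    nra. }
  specialize (Hb l c (Rle_refl _) Hl).
  assert (Hlen0 : 0 <= total_length l).
  { clear -Hl. revert c Hl. induction l as [|[x y] t IH]; simpl; intros c Hl; [lra|].
    destruct Hl as [? [? ?]]. specialize (IH y H1). lra. }
  assert (G * total_variation f l <= eps / 2).
  { apply Rle_trans with (G * (eps / (2 * (G + 1)))).
    - apply Rmult_le_compat_l; lra.
    - assert (0 <= eps / (2 * (G+1))) by (apply Rlt_le, Rdiv_lt_0_compat; lra).
      replace (eps / 2) with ((G + 1) * (eps / (2 * (G+1)))) by (field; lra). nra. }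
  assert (Fb * Kg * total_length l < eps / 2).
  { apply Rle_lt_trans with ((Fb * Kg + 1) * total_length l); [nra|].
    replace (eps / 2) with ((Fb * Kg + 1) * (eps / (2 * (Fb * Kg + 1)))) by (field; nra).
    apply Rmult_lt_compat_l; nra. }
  lra.
Qed.

Lemma hd_interior a b f f' x : has_deriv_on a b f f' -> a < x < b -> derivable_pt_lim f x (f' x).
Proof.
  intros H Hx eps Heps. destruct (H x ltac:(lra) eps Heps) as [d [Hd Hl]].
  exists (mkposreal (Rmin d (Rmin (x - a) (b - x))) ltac:(repeat apply Rmin_glb_lt; lra)).
  simpl. intros h Hh Hhd. pose proof (Rmin_l d (Rmin (x - a) (b - x))).
  pose proof (Rmin_r d (Rmin (x - a) (b - x))). pose proof (Rmin_l (x - a) (b - x)).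
  pose proof (Rmin_r (x - a) (b - x)). apply Hl; auto; [lra|].
  unfold Rabs in Hhd; destruct (Rcase_abs h); lra.
Qed.

Lemma deriv_hd a b f f' : (forall x, derivable_pt_lim f x (f' x)) -> has_deriv_on a b f f'.
Proof.
  intros H x Hx eps Heps. destruct (H x eps Heps) as [d Hd]. exists d. split; [apply cond_pos|].
  intros h Hh Hhd _. apply Hd; auto.
Qed.

Lemma const_closure al be W : al < be -> abs_continuous_on al be W ->
  (forall c d, al < c -> c <= d -> d < be -> W c = W d) ->
  forall x z, al <= x <= be -> al <= z <= be -> W x = W z.
Proof.
  intros Hab HAC Hc.
  set (m := (al + be) / 2).
  assert (Hm : forall x, al <= x <= be -> W x = W m).
  { intros x Hx. cut (W x - W m = 0); [lra|]. apply (Rabs_le_lim _ 1); [|lra].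
    intros eps Heps. destruct (AC_cont al be W x HAC Hx eps Heps) as [r [Hr Hl]].
    set (t := r / (be - al + r + 1)).
    assert (Ht0 : 0 < t) by (apply Rdiv_lt_0_compat; lra).
    assert (Ht1 : t < 1). { unfold t. apply (Rmult_lt_reg_r (be - al + r + 1)); [lra|].
      unfold Rdiv. rewrite Rmult_assoc, Rinv_l by lra. lra. }
    assert (Htr : (be - al) * t < r).
    { unfold t. apply (Rmult_lt_reg_r (be - al + r + 1)); [lra|].
      unfold Rdiv. replace ((be - al) * (r * / (be - al + r + 1)) * (be - al + r + 1))
        with ((be - al) * r * ((be - al + r + 1) * / (be - al + r + 1))) by ring.
      rewrite Rinv_r by lra. nra. }
    set (c := x + (m - x) * t).
    assert (Hcin : al < c < be) by (unfold c, m in *; split; nra).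
    assert (Wcm : W c = W m).
    { destruct (Rle_dec c m). - apply Hc; unfold m in *; lra. - symmetry; apply Hc; unfold m in *; lra. }
    assert (Hcx : Rabs (c - x) < r).
    { unfold c. replace (x + (m - x) * t - x) with ((m - x) * t) by ring.
      rewrite Rabs_mult, (Rabs_right t) by lra.
      assert (Rabs (m - x) <= be - al) by (unfold m; apply Rabs_le; lra). nra. }
    specialize (Hl c ltac:(lra) Hcx). rewrite Wcm in Hl. rewrite Rabs_minus_sym in Hl. lra. }
  intros x z Hx Hz. rewrite (Hm x Hx), (Hm z Hz). auto.
Qed.

Lemma Wconst (w q : R -> R) lam u y' N al be mu phi phi1 :
  has_deriv_on (-1) 1 u y' -> abs_continuous_on (-1) 1 y' -> null_set N ->
  (forall x, -1 < x < 1 -> ~ N x -> derivable_pt_lim y' x (- (lam * w x + q x) * u x)) ->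
  -1 <= al -> al < be -> be <= 1 ->
  (forall x, al < x < be -> lam * w x + q x = mu) ->
  (forall x, derivable_pt_lim phi x (phi1 x)) -> (forall x, derivable_pt_lim phi1 x (- mu * phi x)) ->
  forall x z, al <= x <= be -> al <= z <= be ->
    u x * phi1 x - y' x * phi x = u z * phi1 z - y' z * phi z.
Proof.
  intros Hu Hy HN Hd Ha Hab Hb Hmu Hp Hp1.
  destruct (AC_bounded (-1) 1 y' ltac:(lra) Hy) as [Ky [Ky0 HKy]].
  destruct (hd_bounded (-1) 1 u y' ltac:(lra) Hu) as [Ku [Ku0 HKu]].
  pose proof (lip_of_deriv (-1) 1 u y' Ky Hu HKy) as Lu.
  destruct (hd_bounded al be phi phi1 ltac:(lra) (deriv_hd _ _ _ _ Hp)) as [Kp [Kp0 HKp]].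
  destruct (hd_bounded al be phi1 (fun x => - mu * phi x) ltac:(lra) (deriv_hd _ _ _ _ Hp1)) as [Kp1 [Kp10 HKp1]].
  pose proof (lip_of_deriv al be phi phi1 Kp1 (deriv_hd _ _ _ _ Hp) HKp1) as Lp.
  pose proof (lip_of_deriv al be phi1 (fun x => - mu * phi x) (Rabs mu * Kp) (deriv_hd _ _ _ _ Hp1)) as Lp1.
  assert (Lp1' : forall x y, al <= x -> x <= y -> y <= be ->
            Rabs (phi1 y - phi1 x) <= (Rabs mu * Kp + 1) * (y - x)).
  { apply Lp1. intros x Hx. rewrite Rabs_mult, Rabs_Ropp. apply Rmult_le_compat_l; [apply Rabs_pos|auto]. }
  set (W := fun x => u x * phi1 x - y' x * phi x).
  assert (HAC : abs_continuous_on al be W).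
  { apply AC_minus.
    - apply (AC_mult al be u phi1 Ku (Rabs mu * Kp + 1) Kp1); auto.
      + pose proof (Rabs_pos mu); nra.
      + apply (AC_lip al be u (Ky + 1)); [lra|]. intros; apply Lu; lra.
      + intros; apply HKu; lra.
    - apply (AC_mult al be y' phi Ky (Kp1 + 1) Kp); auto; [lra| |].
      + eapply AC_restrict; eauto.
      + intros; apply HKy; lra. }
  intros x z Hx Hz. change (W x = W z).
  apply (const_closure al be W Hab HAC); auto.
  intros c d Hc Hcd Hdb. apply (ACconst al be W N HAC HN); auto.
  intros t Ht HNt. unfold W.
  assert (H1 : derivable_pt_lim u t (y' t)) by (apply (hd_interior (-1) 1); auto; lra).
  assert (H2 := Hd t ltac:(lra) HNt). rewrite (Hmu t Ht) in H2.
  pose proof (derivable_pt_lim_minus _ _ t _ _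
                (derivable_pt_lim_mult _ _ t _ _ H1 (Hp1 t))
                (derivable_pt_lim_mult _ _ t _ _ H2 (Hp t))) as H3.
  replace 0 with (y' t * phi1 t + u t * (- mu * phi t) - (- mu * u t * phi t + y' t * phi1 t)) by ring.
  exact H3.
Qed.
From Coquelicot Require Import Coquelicot.

Definition Sf (mu t : R) : R :=
  if Rlt_dec 0 mu then sin (sqrt mu * t) / sqrt mu
  else if Rlt_dec mu 0 then (exp (sqrt (- mu) * t) - exp (- (sqrt (- mu) * t))) / (2 * sqrt (- mu))
  else t.
Definition Cf (mu t : R) : R :=
  if Rlt_dec 0 mu then cos (sqrt mu * t)
  else if Rlt_dec mu 0 then (exp (sqrt (- mu) * t) + exp (- (sqrt (- mu) * t))) / 2
  else 1.

Lemma dS mu t : derivable_pt_lim (Sf mu) t (Cf mu t).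
Proof.
  apply is_derive_Reals. unfold Sf, Cf.
  destruct (Rlt_dec 0 mu).
  - assert (0 < sqrt mu) by (apply sqrt_lt_R0; auto).
    auto_derive; auto. field. lra.
  - destruct (Rlt_dec mu 0).
    + assert (0 < sqrt (-mu)) by (apply sqrt_lt_R0; lra).
      auto_derive; auto. field. lra.
    + auto_derive; auto.
Qed.

Lemma dC mu t : derivable_pt_lim (Cf mu) t (- mu * Sf mu t).
Proof.
  apply is_derive_Reals. unfold Sf, Cf.
  destruct (Rlt_dec 0 mu).
  - assert (0 < sqrt mu) by (apply sqrt_lt_R0; auto).
    pose proof (sqrt_sqrt mu ltac:(lra)).
    auto_derive; auto. set (k := sqrt mu) in *. rewrite <- H0. field. lra.
  - destruct (Rlt_dec mu 0).
    + assert (0 < sqrt (-mu)) by (apply sqrt_lt_R0; lra).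
      pose proof (sqrt_sqrt (- mu) ltac:(lra)).
      auto_derive; auto. set (k := sqrt (-mu)) in *. replace mu with (- (k*k)) by lra. field. lra.
    + auto_derive; auto. assert (mu = 0) by lra. subst. ring.
Qed.

Lemma pyth mu t : Cf mu t ^ 2 + mu * Sf mu t ^ 2 = 1.
Proof.
  unfold Sf, Cf. destruct (Rlt_dec 0 mu).
  - assert (0 < sqrt mu) by (apply sqrt_lt_R0; auto).
    pose proof (sqrt_sqrt mu ltac:(lra)). rewrite <- H0 at 2.
    pose proof (sin2_cos2 (sqrt mu * t)). unfold Rsqr in H1.
    field_simplify; [|lra]. lra.
  - destruct (Rlt_dec mu 0).
    + assert (0 < sqrt (-mu)) by (apply sqrt_lt_R0; lra).
      pose proof (sqrt_sqrt (- mu) ltac:(lra)).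
      assert (E : exp (sqrt (- mu) * t) * exp (- (sqrt (- mu) * t)) = 1).
      { rewrite <- exp_plus. rewrite Rplus_opp_r. apply exp_0. }
      set (k := sqrt (-mu)) in *. set (e1 := exp (k * t)) in *. set (e2 := exp (- (k * t))) in *.
      replace mu with (- (k*k)) by lra.
      field_simplify; [|lra]. replace (16 * e1 * e2 * k ^ 2) with (16 * k^2 * (e1 * e2)) by ring.
      rewrite E. field. lra.
    + assert (mu = 0) by lra. subst. ring.
Qed.

Lemma S0 mu : Sf mu 0 = 0.
Proof. unfold Sf. destruct (Rlt_dec 0 mu); [|destruct (Rlt_dec mu 0)].
  - rewrite Rmult_0_r, sin_0. field. apply Rgt_not_eq, sqrt_lt_R0; auto.
  - rewrite Rmult_0_r, Ropp_0, Rminus_diag. field. apply Rgt_not_eq, sqrt_lt_R0; lra.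
  - auto. Qed.

Lemma C0 mu : Cf mu 0 = 1.
Proof. unfold Cf. destruct (Rlt_dec 0 mu); [|destruct (Rlt_dec mu 0)].
  - rewrite Rmult_0_r, cos_0. auto.
  - rewrite Rmult_0_r, Ropp_0, exp_0. field.
  - auto. Qed.

Lemma dS_sh mu x0 x : derivable_pt_lim (fun x => Sf mu (x - x0)) x (Cf mu (x - x0)).
Proof.
  replace (Cf mu (x - x0)) with (Cf mu (x - x0) * 1) by ring.
  apply (derivable_pt_lim_comp (fun x => x - x0) (Sf mu)); [|apply dS].
  replace 1 with (1 - 0) by ring. apply derivable_pt_lim_minus; [apply derivable_pt_lim_id|apply derivable_pt_lim_const].
Qed.

Lemma dC_sh mu x0 x : derivable_pt_lim (fun x => Cf mu (x - x0)) x (- mu * Sf mu (x - x0)).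
Proof.
  replace (- mu * Sf mu (x - x0)) with ((- mu * Sf mu (x - x0)) * 1) by ring.
  apply (derivable_pt_lim_comp (fun x => x - x0) (Cf mu)); [|apply dC].
  replace 1 with (1 - 0) by ring. apply derivable_pt_lim_minus; [apply derivable_pt_lim_id|apply derivable_pt_lim_const].
Qed.

Lemma dS2 mu t : derivable_pt_lim (fun t => Sf mu t ^ 2) t (INR 2 * Sf mu t ^ 1 * Cf mu t).
Proof.
  apply (derivable_pt_lim_comp (Sf mu) (fun x => x ^ 2)); [apply dS|].
  apply derivable_pt_lim_pow.
Qed.

Lemma cont_S2 mu x : continuous (fun t => Sf mu t ^ 2) x.
Proof.
  apply (@ex_derive_continuous R_AbsRing R_NormedModule). eexists. apply is_derive_Reals. apply dS2.
Qed.

Lemma int_S2 mu a b : mu <> 0 ->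
  is_RInt (fun t => Sf mu t ^ 2) a b
    ((b - Sf mu b * Cf mu b) / (2 * mu) - (a - Sf mu a * Cf mu a) / (2 * mu)).
Proof.
  intro Hmu.
  apply (is_RInt_derive (fun t => (t - Sf mu t * Cf mu t) / (2 * mu))).
  - intros t _. apply is_derive_Reals.
    assert (H1 := derivable_pt_lim_mult _ _ t _ _ (dS mu t) (dC mu t)).
    assert (H2 := derivable_pt_lim_minus _ _ t _ _ (derivable_pt_lim_id t) H1).
    assert (H3 := derivable_pt_lim_mult _ _ t _ _ H2 (derivable_pt_lim_const (/(2*mu)) t)).
    replace (Sf mu t ^ 2) with ((1 - (Cf mu t * Cf mu t + Sf mu t * (- mu * Sf mu t))) * / (2 * mu) +
                                (t - Sf mu t * Cf mu t) * 0).
    + exact H3.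
    + pose proof (pyth mu t). replace (Cf mu t * Cf mu t) with (1 - mu * Sf mu t ^ 2) by lra.
      field. auto.
  - intros; apply cont_S2.
Qed.

Lemma Sf_0 t : Sf 0 t = t.
Proof. unfold Sf. destruct (Rlt_dec 0 0); [lra|]. destruct (Rlt_dec 0 0); [lra|]. auto. Qed.
Lemma Cf_0 t : Cf 0 t = 1.
Proof. unfold Cf. destruct (Rlt_dec 0 0); [lra|]. destruct (Rlt_dec 0 0); [lra|]. auto. Qed.

Lemma int_S2_0 a b : is_RInt (fun t => Sf 0 t ^ 2) a b (b ^ 3 / 3 - a ^ 3 / 3).
Proof.
  apply (is_RInt_derive (fun t => t ^ 3 / 3)).
  - intros t _. rewrite Sf_0. auto_derive; auto. field.
  - intros; apply cont_S2.
Qed.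

Lemma sqrt_lt_pi2 mu : 0 < mu -> mu < PI ^ 2 / 4 -> sqrt mu < PI / 2.
Proof.
  intros H1 H2. pose proof (sqrt_sqrt mu ltac:(lra)). pose proof (sqrt_pos mu).
  pose proof PI_RGT_0. destruct (Rlt_le_dec (sqrt mu) (PI/2)); auto. nra.
Qed.

Lemma tan_ge k : 0 < k -> k < PI / 2 -> k * cos k <= sin k.
Proof.
  intros H1 H2.
  destruct (MVT_cor2 (fun x => sin x - x * cos x) (fun x => x * sin x) 0 k H1) as [c [Hc Hc2]].
  - intros c _. apply is_derive_Reals. auto_derive; auto. ring.
  - rewrite sin_0, cos_0 in Hc. assert (0 < sin c) by (apply sin_gt_0; pose proof PI_RGT_0; lra).
    assert (0 < c * sin c * (k - 0)) by (repeat apply Rmult_lt_0_compat; lra). lra.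
Qed.

Lemma tanh_le k : 0 < k -> exp k - exp (- k) <= k * (exp k + exp (- k)).
Proof.
  intros H1.
  destruct (MVT_cor2 (fun x => x * (exp x + exp (-x)) - (exp x - exp (-x))) (fun x => x * (exp x - exp (- x))) 0 k H1) as [c [Hc Hc2]].
  - intros c _. apply is_derive_Reals. auto_derive; auto. ring.
  - rewrite Ropp_0, exp_0 in Hc. assert (exp (-c) < exp c) by (apply exp_increasing; lra).
    assert (0 < c * (exp c - exp (- c)) * (k - 0)) by (repeat apply Rmult_lt_0_compat; lra). lra.
Qed.

Lemma right_facts mu : mu < PI ^ 2 / 4 ->
  Sf mu (-1) < 0 /\ 0 < Cf mu (-1) /\
  exists I, is_RInt (fun t => Sf mu t ^ 2) (-1) 0 I /\ I <= Sf mu (-1) ^ 2 / 2.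
Proof.
  intro Hmu.
  assert (Hsign : mu <> 0 -> Sf mu (-1) < 0 /\ 0 < Cf mu (-1) /\ mu * (Cf mu (-1) + Sf mu (-1)) <= 0).
  { intro Hne. unfold Sf, Cf. destruct (Rlt_dec 0 mu).
    - pose proof (sqrt_lt_pi2 mu r Hmu). assert (0 < sqrt mu) by (apply sqrt_lt_R0; auto).
      set (k := sqrt mu) in *. replace (k * -1) with (- k) by ring. rewrite sin_neg, cos_neg.
      assert (0 < sin k) by (apply sin_gt_0; pose proof PI_RGT_0; lra).
      assert (0 < cos k) by (apply cos_gt_0; lra).
      pose proof (tan_ge k H0 H). assert (0 < / k) by (apply Rinv_0_lt_compat; lra).
      split; [|split; auto].
      + unfold Rdiv. nra.
      + replace (cos k + - sin k / k) with (- ((sin k - k * cos k) * / k)) by (field; lra).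
        assert (0 <= (sin k - k * cos k) * / k) by (apply Rmult_le_pos; lra). nra.
    - destruct (Rlt_dec mu 0); [|lra].
      assert (0 < sqrt (-mu)) by (apply sqrt_lt_R0; lra).
      set (k := sqrt (-mu)) in *. replace (k * -1) with (- k) by ring. rewrite Ropp_involutive.
      pose proof (tanh_le k H). assert (exp (-k) < exp k) by (apply exp_increasing; lra).
      pose proof (exp_pos k). pose proof (exp_pos (-k)).
      assert (0 < / (2 * k)) by (apply Rinv_0_lt_compat; lra).
      split; [unfold Rdiv; nra|split; [lra|]].
      replace ((exp (- k) + exp k) / 2 + (exp (- k) - exp k) / (2 * k)) with
        ((k * (exp k + exp (-k)) - (exp k - exp (- k))) * / (2 * k)) by (field; lra).
      assert (0 <= (k * (exp k + exp (-k)) - (exp k - exp (- k))) * / (2 * k)) by (apply Rmult_le_pos; lra). nra. }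
  destruct (Req_dec mu 0) as [->|Hne].
  - rewrite Sf_0, Cf_0. split; [lra|split; [lra|]].
    exists (0 ^ 3 / 3 - (-1) ^ 3 / 3). split; [apply int_S2_0|]. lra.
  - destruct (Hsign Hne) as [H1 [H2 H3]]. split; auto. split; auto.
    eexists. split; [apply int_S2; auto|].
    rewrite S0, C0. pose proof (pyth mu (-1)).
    set (s := Sf mu (-1)) in *. set (c := Cf mu (-1)) in *.
    assert (E : (0 - 0 * 1) / (2 * mu) - (-1 - s * c) / (2 * mu) - s ^ 2 / 2 = c * (mu * (c + s)) / (2 * (mu * mu))).
    { replace ((0 - 0 * 1) / (2 * mu) - (-1 - s * c) / (2 * mu)) with ((c ^ 2 + mu * s ^ 2 + s * c) / (2 * mu))
        by (rewrite H; field; auto). field. auto. }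
    assert (0 < mu * mu) by nra.
    assert (c * (mu * (c + s)) / (2 * (mu * mu)) <= 0).
    { unfold Rdiv. assert (0 < / (2 * (mu * mu))) by (apply Rinv_0_lt_compat; lra).
      assert (c * (mu * (c + s)) <= 0) by (replace (c * (mu * (c + s))) with (- (c * - (mu * (c+s)))) by ring;
         assert (0 <= c * - (mu * (c+s))) by (apply Rmult_le_pos; lra); lra).
      assert (0 <= - (c * (mu * (c + s))) * / (2 * (mu * mu))) by (apply Rmult_le_pos; lra). lra. }
    lra.
Qed.

Lemma left_int mu : 0 < mu -> exists I, is_RInt (fun t => Sf mu t ^ 2) 0 1 I /\ 2 * mu * I = 1 - Sf mu 1 * Cf mu 1.
Proof.
  intro H. eexists. split; [apply int_S2; lra|]. rewrite S0, C0. field. lra.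
Qed.

Lemma dscal c f l x : derivable_pt_lim f x l -> derivable_pt_lim (fun x => c * f x) x (c * l).
Proof.
  intro H. pose proof (derivable_pt_lim_mult _ _ x _ _ (derivable_pt_lim_const c x) H).
  replace (c * l) with (0 * f x + c * l) by ring. exact H0.
Qed.

Lemma solve2 u y c s mu B : c ^ 2 + mu * s ^ 2 = 1 -> u * c - y * s = 0 -> - mu * u * s - y * c = - B ->
  u = B * s /\ y = B * c.
Proof.
  intros P W1 W2. replace B with (mu * u * s + y * c) by lra. split.
  - assert (u - (mu*u*s+y*c)*s = c*(u*c - y*s) + u*(1 - (c^2+mu*s^2))) by ring.
    rewrite W1, P in H. lra.
  - assert (y - (mu*u*s+y*c)*c = - mu * s * (u*c - y*s) + y*(1 - (c^2+mu*s^2))) by ring.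
    rewrite W1, P in H. lra.
Qed.

Lemma w_pos x : 0 <= x -> w_sign x = 1.
Proof. intro H. unfold w_sign. destruct (Rle_dec 0 x); [auto|lra]. Qed.
Lemma w_neg x : x < 0 -> w_sign x = -1.
Proof. intro H. unfold w_sign. destruct (Rle_dec 0 x); [lra|auto]. Qed.

Lemma piece lam (q : R -> R) u y' N al be mu x0 :
  has_deriv_on (-1) 1 u y' -> abs_continuous_on (-1) 1 y' -> null_set N ->
  (forall x, -1 < x < 1 -> ~ N x -> derivable_pt_lim y' x (- (lam * w_sign x + q x) * u x)) ->
  -1 <= al -> al < be -> be <= 1 ->
  (forall x, al < x < be -> lam * w_sign x + q x = mu) ->
  (x0 = al \/ x0 = be) -> u x0 = 0 ->
  forall x, al <= x <= be -> u x = y' x0 * Sf mu (x - x0) /\ y' x = y' x0 * Cf mu (x - x0).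
Proof.
  intros Hu Hy HN Hd Ha Hab Hb Hmu Hx0 Hu0 x Hx.
  assert (Hx0' : al <= x0 <= be) by (destruct Hx0; lra).
  pose proof (Wconst w_sign q lam u y' N al be mu (fun x => Sf mu (x - x0)) (fun x => Cf mu (x - x0))
     Hu Hy HN Hd Ha Hab Hb Hmu (dS_sh mu x0) (dC_sh mu x0) x x0 Hx Hx0') as W1.
  pose proof (Wconst w_sign q lam u y' N al be mu (fun x => Cf mu (x - x0)) (fun x => - mu * Sf mu (x - x0))
     Hu Hy HN Hd Ha Hab Hb Hmu (dC_sh mu x0) (fun x => dscal (- mu) _ _ x (dS_sh mu x0 x)) x x0 Hx Hx0') as W2.
  simpl in W1, W2. rewrite Rminus_diag, S0, C0, Hu0 in W1, W2.
  apply (solve2 _ _ _ _ mu); [apply pyth| |]; lra.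
Qed.

Lemma comp q0 lam u : q0 < - (PI ^ 2 / 4) -> lam < - Rabs q0 + PI ^ 2 / 4 ->
  is_solution (-1) 1 w_sign (fun _ => - q0) lam u -> u (-1) = 0 -> u 1 = 0 ->
  exists P M, is_RInt (fun x => u x ^ 2) 0 1 P /\ is_RInt (fun x => u x ^ 2) (-1) 0 M /\
    P <= M /\ ((exists x, -1 <= x <= 1 /\ u x <> 0) -> P < M).
Proof.
  intros Hq Hlam [y' [Hu [Hy [N [HN Hd]]]]] Hum1 Hu1.
  pose proof PI_RGT_0 as Hpi.
  rewrite Rabs_left in Hlam by nra.
  set (muR := lam - q0). set (muL := - lam - q0).
  assert (HmuR : muR < PI ^ 2 / 4) by (unfold muR; lra).
  assert (HmuL : 0 < muL) by (unfold muL; nra).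
  assert (PR := piece lam (fun _ => - q0) u y' N 0 1 muR 1 Hu Hy HN Hd ltac:(lra) ltac:(lra) ltac:(lra)
     ltac:(intros x Hx; rewrite w_pos by lra; unfold muR; ring) ltac:(right; auto) Hu1).
  assert (PL := piece lam (fun _ => - q0) u y' N (-1) 0 muL (-1) Hu Hy HN Hd ltac:(lra) ltac:(lra) ltac:(lra)
     ltac:(intros x Hx; rewrite w_neg by lra; unfold muL; ring) ltac:(left; auto) Hum1).
  set (B := y' 1) in *. set (D := y' (-1)) in *.
  destruct (right_facts muR HmuR) as [HsR [HcR [I [HI HIle]]]].
  destruct (left_int muL HmuL) as [J [HJ HJe]].
  destruct (PR 0 ltac:(lra)) as [Ha1 Hb1]. destruct (PL 0 ltac:(lra)) as [Ha2 Hb2].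
  replace (0 - 1) with (-1) in Ha1, Hb1 by ring. replace (0 - -1) with 1 in Ha2, Hb2 by ring.
  exists (B ^ 2 * I), (D ^ 2 * J). split; [|split; [|split]].
  - assert (H1 : is_RInt (fun t => Sf muR t ^ 2) (1 * 0 + -1) (1 * 1 + -1) I).
    { replace (1 * 0 + -1) with (-1) by ring. replace (1 * 1 + -1) with 0 by ring. auto. }
    pose proof (is_RInt_scal _ _ _ (B ^ 2) _ (is_RInt_comp_lin _ _ _ _ _ _ H1)) as H2.
    eapply is_RInt_ext; [|exact H2].
    intros x Hx. rewrite Rmin_left, Rmax_right in Hx by lra.
    destruct (PR x ltac:(lra)) as [E _]. rewrite E. simpl.
    replace (1 * x + -1) with (x - 1) by ring. unfold scal; simpl; unfold mult; simpl. ring.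
  - assert (H1 : is_RInt (fun t => Sf muL t ^ 2) (1 * (-1) + 1) (1 * 0 + 1) J).
    { replace (1 * (-1) + 1) with 0 by ring. replace (1 * 0 + 1) with 1 by ring. auto. }
    pose proof (is_RInt_scal _ _ _ (D ^ 2) _ (is_RInt_comp_lin _ _ _ _ _ _ H1)) as H2.
    eapply is_RInt_ext; [|exact H2].
    intros x Hx. rewrite Rmin_left, Rmax_right in Hx by lra.
    destruct (PL x ltac:(lra)) as [E _]. rewrite E. simpl.
    replace (1 * x + 1) with (x - -1) by ring. unfold scal; simpl; unfold mult; simpl. ring.
  - pose proof (pyth muL 1) as Py.
    set (sR := Sf muR (-1)) in *. set (cR := Cf muR (-1)) in *.
    set (S1 := Sf muL 1) in *. set (C1 := Cf muL 1) in *.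
    assert (EM : 2 * muL * (D ^ 2 * J) = (B * cR) ^ 2 + muL * (B * sR) ^ 2 - (B * sR) * (B * cR)).
    { replace (2 * muL * (D ^ 2 * J)) with (D ^ 2 * (2 * muL * J)) by ring. rewrite HJe.
      rewrite <- Py at 1. assert (B * cR = D * C1) by lra. assert (B * sR = D * S1) by lra.
      rewrite H, H0. ring. }
    assert (EP : B ^ 2 * I <= B ^ 2 * (sR ^ 2 / 2)) by (apply Rmult_le_compat_l; [nra|auto]).
    assert (Hab : 0 <= B ^ 2 * (- sR * cR)) by (apply Rmult_le_pos; nra).
    assert (0 <= 2 * muL * (D ^ 2 * J - B ^ 2 * I)) by nra.
    destruct (Rle_lt_dec (B ^ 2 * I) (D ^ 2 * J)); auto. nra.
  - intros [x [Hx Hux]].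
    pose proof (pyth muL 1) as Py.
    set (sR := Sf muR (-1)) in *. set (cR := Cf muR (-1)) in *.
    set (S1 := Sf muL 1) in *. set (C1 := Cf muL 1) in *.
    assert (HB : B <> 0).
    { intro HB0. apply Hux.
      assert (HD : D = 0).
      { assert (D * S1 = 0) by (rewrite HB0 in Ha1; lra). assert (D * C1 = 0) by (rewrite HB0 in Hb1; lra).
        assert (D ^ 2 = 0); [|nra].
        assert (D ^ 2 = (D * C1) ^ 2 + muL * (D * S1) ^ 2)
          by (transitivity (D ^ 2 * (C1 ^ 2 + muL * S1 ^ 2)); [rewrite Py; ring|ring]).
        rewrite H1, H, H0. ring. }
      destruct (Rle_lt_dec 0 x).
      - destruct (PR x ltac:(lra)) as [E _]. rewrite E, HB0. ring.
      - destruct (PL x ltac:(lra)) as [E _]. rewrite E, HD. ring. }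
    assert (EM : 2 * muL * (D ^ 2 * J) = (B * cR) ^ 2 + muL * (B * sR) ^ 2 - (B * sR) * (B * cR)).
    { replace (2 * muL * (D ^ 2 * J)) with (D ^ 2 * (2 * muL * J)) by ring. rewrite HJe.
      rewrite <- Py at 1. assert (B * cR = D * C1) by lra. assert (B * sR = D * S1) by lra.
      rewrite H, H0. ring. }
    assert (EP : B ^ 2 * I <= B ^ 2 * (sR ^ 2 / 2)) by (apply Rmult_le_compat_l; [nra|auto]).
    assert (Hab : 0 < B ^ 2 * (- sR * cR)) by (apply Rmult_lt_0_compat; [apply pow2_gt_0; auto|nra]).
    assert (0 < 2 * muL * (D ^ 2 * J - B ^ 2 * I)) by nra.
    destruct (Rlt_le_dec (B ^ 2 * I) (D ^ 2 * J)); auto. nra.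
Qed.

Theorem mainTheorem5 (q0 : R) (hq0 : q0 < - (PI ^ 2 / 4)) :
  richardson_minus_ge (-1) 1 w_sign (fun _ => - q0) (- Rabs q0 + PI ^ 2 / 4).
Proof.
  intros c' Hc'. exists (- Rabs q0 + PI ^ 2 / 4). split; auto.
  intros lam u1 u2 Hlam [S1 [S2 [H1a [H2a [H1b [H2b Hex]]]]]].
  destruct (comp q0 lam u1 hq0 Hlam S1 H1a H1b) as [P1 [M1 [HP1 [HM1 [Hle1 Hlt1]]]]].
  destruct (comp q0 lam u2 hq0 Hlam S2 H2a H2b) as [P2 [M2 [HP2 [HM2 [Hle2 Hlt2]]]]].
  set (f := fun x => w_sign x * (u1 x ^ 2 + u2 x ^ 2)).
  assert (HL : is_RInt f (-1) 0 (opp (plus M1 M2))).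
  { pose proof (is_RInt_opp _ _ _ _ (is_RInt_plus _ _ _ _ _ _ HM1 HM2)) as H.
    eapply is_RInt_ext; [|exact H]. intros x Hx. rewrite Rmin_left, Rmax_right in Hx by lra.
    unfold f. rewrite w_neg by lra. unfold opp, plus; simpl. ring. }
  assert (HR : is_RInt f 0 1 (plus P1 P2)).
  { pose proof (is_RInt_plus _ _ _ _ _ _ HP1 HP2) as H.
    eapply is_RInt_ext; [|exact H]. intros x Hx. rewrite Rmin_left, Rmax_right in Hx by lra.
    unfold f. rewrite w_pos by lra. unfold plus; simpl. ring. }
  pose proof (is_RInt_Chasles _ _ _ _ _ _ HL HR) as HT.
  assert (Hex' : ex_RInt f (-1) 1) by (eexists; exact HT).
  exists (ex_RInt_Reals_0 _ _ _ Hex').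
  rewrite <- RInt_Reals. rewrite (is_RInt_unique _ _ _ _ HT).
  change (- (M1 + M2) + (P1 + P2) < 0).
  destruct Hex as [x [Hx [Hu|Hu]]].
  - specialize (Hlt1 (ex_intro _ x (conj Hx Hu))). lra.
  - specialize (Hlt2 (ex_intro _ x (conj Hx Hu))). lra.
Qed.
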